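(* The DS matching and pricing scheme described in the context is budget balancing: $\sum_{d\in\mathcal{D}^*}q_d=\sum_{r\in\mathcal{R}^*}q_r$.
   Context: One decision epoch with finite sets $\mathcal{D}$ (drivers) and $\mathcal{R}$ (riders). Rider $r$ requests a trip of shortest-route length $h_r$ with destination $t_r$; $\tau_{dr}\ge0$ is the pick-up distance from driver $d$ to rider $r$, $\tau_d^{\min}=\min_{r}\tau_{dr}$, $\tau_r^{\min}=\min_d\tau_{dr}$. Public constants $\alpha,\beta>0$, and $f(t_r)$ is a given opportunity cost depending on the destination. Driver $d$ reports a bid $b_d$ and rider $r$ a bid $\delta_r$. For a potential match $(d,r)$ the valuations are $P_d=\alpha h_r+b_d(\tau_{dr}-\tau_d^{\min})+f(t_r)$ and $P_r=\beta h_r-\delta_r(\tau_{dr}-\tau_r^{\min})$, and the social welfare is $\sigma_{dr}=P_r-P_d$. Each potential match has a sensing gain $\zeta_{dr}\ge0$ not depending on bids. DS matching problem: maximize $\sum_{r,d}\zeta_{dr}x_{dr}$ subject to $\sum_r x_{dr}\le1$ $\forall d$, $\sum_d x_{dr}\le 1$ $\forall r$, $\sum_{r,d}\sigma_{dr}x_{dr}\ge0$, $x_{dr}\in\{0,1\}$; let $x^*$ be an optimal solution with value $U^*$, $\mathcal{D}^*,\mathcal{R}^*$ the sets of matched drivers and riders, and $V=\sum_{r,d}\sigma_{dr}x^*_{dr}$. For $d\in\mathcal{D}^*$ let $U^*_{d-}$ be the optimal value of the same problem with driver $d$ removed and $\Delta U_d=U^*-U^*_{d-}$; analogously $\Delta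 U_r=U^*-U^*_{r-}$ for $r\in\mathcal{R}^*$. Shares: $\lambda_d=\Delta U_d/(\sum_{d'\in\mathcal{D}^*}\Delta U_{d'}+\sum_{r'\in\mathcal{R}^*}\Delta U_{r'})$ and $\lambda_r=\Delta U_r/(\text{same denominator})$ (the denominator is taken to be nonzero so the shares are defined). Bonuses $\rho_d=V\lambda_d$, $\rho_r=V\lambda_r$. For a matched pair $(d,r)$ (with $P_d,P_r$ evaluated at that pair), the platform pays driver $d$ the amount $q_d=P_d+\rho_d$ and charges rider $r$ the amount $q_r=P_r-\rho_r$. *)

(* Defs.v *)
From HB Require Import structures.
From mathcomp Require Import all_boot all_order all_algebra.
Set Implicit Arguments. Unset Strict Implicit. Unset Printing Implicit Defensive.
Import Order.TTheory GRing.Theory Num.Theory.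
Local Open Scope ring_scope.

(* K : the real numbers (any real field), Dr : drivers, Rd : riders,
   T : destinations. *)
Record market (K : realFieldType) (Dr Rd : finType) (T : Type) := Market {
  alpha : K;
  beta  : K;
  h     : Rd -> K;      (* h_r : shortest-route trip length of rider r *)
  dest  : Rd -> T;
  fcost : T -> K;       (* f : opportunity cost of a destination *)
  tau   : Dr -> Rd -> K;(* tau_{dr} : pick-up distance *)
  bidD  : Dr -> K;
  bidR  : Rd -> K;
  zeta  : Dr -> Rd -> K (* zeta_{dr} : sensing gain *)
}.

Section DS.
Variables (K : realFieldType) (Dr Rd : finType) (T : Type) (M : market K Dr Rd T).

(* tau_d^min = min_r tau_{dr}; the fold is seeded with tau_{dr} for the pair
   at hand, which is itself in the range, so this is exactly the minimum. *)
Definition tau_min_d (d : Dr) (r : Rd) : K :=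
  \big[Num.min/tau M d r]_(r' : Rd) tau M d r'.
Definition tau_min_r (d : Dr) (r : Rd) : K :=
  \big[Num.min/tau M d r]_(d' : Dr) tau M d' r.

Definition Pd (d : Dr) (r : Rd) : K :=
  alpha M * h M r + bidD M d * (tau M d r - tau_min_d d r) + fcost M (dest M r).
Definition Pr (d : Dr) (r : Rd) : K :=
  beta M * h M r - bidR M r * (tau M d r - tau_min_r d r).
Definition sigma (d : Dr) (r : Rd) : K := Pr d r - Pd d r.

Definition matching := {ffun Dr * Rd -> bool}.

Definition welfare (x : matching) : K :=
  \sum_(p : Dr * Rd) (x p)%:R * sigma p.1 p.2.
Definition gain (x : matching) : K :=
  \sum_(p : Dr * Rd) (x p)%:R * zeta M p.1 p.2.

Definition feasible (x : matching) : bool :=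
  [forall d : Dr, #|[pred r : Rd | x (d, r)]| <= 1]%N &&
  [forall r : Rd, #|[pred d : Dr | x (d, r)]| <= 1]%N &&
  (0 <= welfare x).

Definition optimal (x : matching) : Prop :=
  feasible x /\ forall y : matching, feasible y -> gain y <= gain x.

(* The feasible set always contains the empty matching (value 0) and the
   gains zeta are nonnegative, so seeding the max with 0 is harmless. *)
Definition opt_value (P : pred matching) : K :=
  \big[Num.max/0]_(x : matching | feasible x && P x) gain x.

Definition U_minus_d (d : Dr) : K :=
  opt_value [pred x : matching | [forall r : Rd, ~~ x (d, r)]].
Definition U_minus_r (r : Rd) : K :=
  opt_value [pred x : matching | [forall d : Dr, ~~ x (d, r)]].

Variable xs : matching.

Definition Ustar : K := gain xs.
Definition V : K := welfare xs.
Definition Dstar : {set Dr} := [set d | [exists r, xs (d, r)]].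
Definition Rstar : {set Rd} := [set r | [exists d, xs (d, r)]].

Definition dU_d (d : Dr) : K := Ustar - U_minus_d d.
Definition dU_r (r : Rd) : K := Ustar - U_minus_r r.

Definition share_den : K :=
  \sum_(d in Dstar) dU_d d + \sum_(r in Rstar) dU_r r.

Definition lambda_d (d : Dr) : K := dU_d d / share_den.
Definition lambda_r (r : Rd) : K := dU_r r / share_den.

Definition rho_d (d : Dr) : K := V * lambda_d d.
Definition rho_r (r : Rd) : K := V * lambda_r r.

Definition q_d (d : Dr) : K :=
  if [pick r | xs (d, r)] is Some r then Pd d r + rho_d d else 0.
Definition q_r (r : Rd) : K :=
  if [pick d | xs (d, r)] is Some d then Pr d r - rho_r r else 0.

End DS.

(* Main.v *)
Require Import Defs.
From HB Require Import structures.
From mathcomp Require Import all_boot all_order all_algebra.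
From mathcomp Require Import ring lra.
Import Order.TTheory GRing.Theory Num.Theory.
Local Open Scope ring_scope.

Lemma row_sum (K : realFieldType) (Dr Rd : finType) (xs : matching Dr Rd)
  (F : Dr -> Rd -> K) :
  (forall d, #|[pred r : Rd | xs (d, r)]| <= 1)%N ->
  \sum_(p : Dr * Rd) (xs p)%:R * F p.1 p.2 =
  \sum_d (if [pick r | xs (d, r)] is Some r then F d r else 0).
Proof.
move=> H; rewrite (eq_bigr (fun p => (xs (p.1, p.2))%:R * F p.1 p.2)); last by case.
rewrite -(pair_bigA _ (fun d r => (xs (d, r))%:R * F d r)) /=; apply: eq_bigr => d _.
case: pickP => [r Hr|Hn].
  rewrite (bigD1 r) //= Hr mul1r big1 ?addr0 // => r' Hr'.
  case Hx: (xs (d, r')); last by rewrite mul0r.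
  have := card_le1_eqP (H d) r r'; rewrite !inE Hr Hx => /(_ isT isT) E.
  by rewrite E eqxx in Hr'.
by apply: big1 => r _; rewrite Hn mul0r.
Qed.

Lemma col_sum (K : realFieldType) (Dr Rd : finType) (xs : matching Dr Rd)
  (F : Dr -> Rd -> K) :
  (forall r, #|[pred d : Dr | xs (d, r)]| <= 1)%N ->
  \sum_(p : Dr * Rd) (xs p)%:R * F p.1 p.2 =
  \sum_r (if [pick d | xs (d, r)] is Some d then F d r else 0).
Proof.
move=> H; rewrite (eq_bigr (fun p => (xs (p.1, p.2))%:R * F p.1 p.2)); last by case.
rewrite -(pair_bigA _ (fun d r => (xs (d, r))%:R * F d r)) /= exchange_big; apply: eq_bigr => r _.
case: pickP => [d Hd|Hn].
  rewrite (bigD1 d) //= Hd mul1r big1 ?addr0 // => d' Hd'.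
  case Hx: (xs (d', r)); last by rewrite mul0r.
  have := card_le1_eqP (H r) d d'; rewrite !inE Hd Hx => /(_ isT isT) E.
  by rewrite E eqxx in Hd'.
by apply: big1 => d _; rewrite Hn mul0r.
Qed.

Theorem proposition2 (K : realFieldType) (Dr Rd : finType) (T : Type)
    (M : market K Dr Rd T) (xs : matching Dr Rd) :
  0 < alpha M -> 0 < beta M ->
  (forall d r, 0 <= tau M d r) ->
  (forall d r, 0 <= zeta M d r) ->
  optimal M xs ->
  share_den M xs != 0 ->
  \sum_(d in Dstar xs) q_d M xs d = \sum_(r in Rstar xs) q_r M xs r.
Proof.
move=> _ _ _ _ [/andP[/andP[/forallP Hd /forallP Hr] _] _] Hden.
have E1 : \sum_(d in Dstar xs) q_d M xs d =
   \sum_(p : Dr * Rd) (xs p)%:R * Pd M p.1 p.2 + \sum_(d in Dstar xs) rho_d M xs d.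
  rewrite (@row_sum _ _ _ _ (Pd M) Hd) big_mkcond /= [X in _ = _ + X]big_mkcond /= -big_split /=.
  apply: eq_bigr => d _.
  rewrite /q_d /Dstar inE; case: pickP => [r Hr1|Hn].
    by have -> : [exists r, xs (d, r)] by apply/existsP; exists r.
  have -> : [exists r, xs (d, r)] = false.
  by apply/negbTE/negP => /existsP [r]; rewrite Hn.
  by rewrite addr0.
have E2 : \sum_(r in Rstar xs) q_r M xs r =
   \sum_(p : Dr * Rd) (xs p)%:R * Pr M p.1 p.2 - \sum_(r in Rstar xs) rho_r M xs r.
  rewrite (@col_sum _ _ _ _ (Pr M) Hr) big_mkcond /= [X in _ = _ - X]big_mkcond /= -sumrB /=.
  apply: eq_bigr => r _.
  rewrite /q_r /Rstar inE; case: pickP => [d0 Hd0|Hn].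
    by have -> : [exists d, xs (d, r)] by apply/existsP; exists d0.
  have -> : [exists d, xs (d, r)] = false.
    by apply/negbTE/negP => /existsP [d]; rewrite Hn.
  by rewrite subr0.
have EV : V M xs = \sum_(p : Dr * Rd) (xs p)%:R * Pr M p.1 p.2
              - \sum_(p : Dr * Rd) (xs p)%:R * Pd M p.1 p.2.
  rewrite /V /welfare -sumrB; apply: eq_bigr => p _; rewrite /sigma; ring.
have ER : \sum_(d in Dstar xs) rho_d M xs d + \sum_(r in Rstar xs) rho_r M xs r
          = V M xs.
  rewrite /rho_d /rho_r /lambda_d /lambda_r -!mulr_sumr -mulrDr -!mulr_suml -mulrDl.
  by rewrite -/(share_den M xs) mulfV // mulr1.
rewrite E1 E2; rewrite EV in ER; lra.
Qed.
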